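(* Let $K=\mathbb{Z}/3$ and let $G$ be a simple graph with $s\ge1$ edges that has no Eulerian subgraph with an even (positive) number of edges. Then for every $d\ge0$, $$\dim_K C_X(d)=\sum_{i\ge0}\binom{s}{d-2i},$$ where $\binom{s}{k}=0$ for $k<0$.
   Context: Let $G$ have vertex set $\{1,\dots,n\}$ and edges $e_1,\dots,e_s$, identified with variables of $S=K[t_1,\dots,t_s]$, $K$ a finite field. Let $X\subseteq\mathbb{P}^{s-1}$ be the image of the projective torus $\{(x_1:\dots:x_n): x_i\neq0\}\subseteq\mathbb{P}^{n-1}$ under the map whose $k$-th coordinate is $x_ix_j$ when $e_k=\{i,j\}$. Order $X=\{P_1,\dots,P_m\}$. For $d\ge0$, $C_X(d)\subseteq K^m$ is the image of the space $S_d$ of degree-$d$ forms under $f\mapsto \big(f(P_1)/t_1^d(P_1),\dots,f(P_m)/t_1^d(P_m)\big)$. An Eulerian subgraph is a subgraph in which every vertex has even degree. *)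

(* Defs.v *)
From HB Require Import structures.
From mathcomp Require Import all_boot all_order all_algebra.
From mathcomp Require Import mpoly.
Set Implicit Arguments. Unset Strict Implicit. Unset Printing Implicit Defensive.
Import GRing.Theory.
Local Open Scope ring_scope.

Notation K := 'F_3.

Definition simple_graph (n s : nat) (E : 'I_s -> {set 'I_n}) : Prop :=
  (forall k, #|E k| = 2%N) /\ injective E.

Definition sub_deg n s (E : 'I_s -> {set 'I_n}) (F : {set 'I_s}) (v : 'I_n) : nat :=
  #|[set k in F | v \in E k]|.

Definition eulerian n s (E : 'I_s -> {set 'I_n}) (F : {set 'I_s}) : Prop :=
  forall v, ~~ odd (sub_deg E F v).

(* projective torus points, represented by affine vectors with nonzero coords *)
Definition torus (n : nat) : {set {ffun 'I_n -> K}} :=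
  [set x : {ffun 'I_n -> K} | [forall i, x i != 0]].

Definition phiE n s (E : 'I_s -> {set 'I_n}) (x : {ffun 'I_n -> K}) : {ffun 'I_s -> K} :=
  [ffun k => \prod_(i in E k) x i].

(* the projective point [y] in P^{s-1}, as the set of its affine representatives *)
Definition pclass s (y : {ffun 'I_s -> K}) : {set {ffun 'I_s -> K}} :=
  [set z | [exists c : K, (c != 0) && (z == [ffun k => c * y k])]].

Definition Xset n s (E : 'I_s -> {set 'I_n}) : {set {set {ffun 'I_s -> K}}} :=
  [set pclass (phiE E x) | x in torus n].

Definition rep s (P : {set {ffun 'I_s -> K}}) : {ffun 'I_s -> K} :=
  odflt 0 [pick y in P].

(* the evaluation vector (f(P_1)/t_1^d(P_1), ..., f(P_m)/t_1^d(P_m)),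
   X ordered as P_j := enum_val j *)
Definition evvec n s (E : 'I_s -> {set 'I_n}) (t1 : 'I_s) (d : nat)
  (f : {mpoly K[s]}) : 'rV[K]_(#|Xset E|) :=
  \row_(j < #|Xset E|)
     (f.@[fun k => rep (enum_val j) k] / (rep (enum_val j) t1) ^+ d).

Definition in_CX n s (E : 'I_s -> {set 'I_n}) (t1 : 'I_s) (d : nat)
  (v : 'rV[K]_(#|Xset E|)) : Prop :=
  exists f : {mpoly K[s]}, f \is d.-homog /\ v = evvec E t1 d f.
Arguments in_CX {n s} E t1 d v.

(* Main.v *)
Require Import Defs.
From HB Require Import structures.
From mathcomp Require Import all_boot all_order all_algebra all_field.
From mathcomp Require Import mpoly.
From mathcomp Require Import zify.
Import GRing.Theory.
Local Open Scope ring_scope.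

Lemma three0 : (3%:R : K) = 0.
Proof. exact: (GRing.pcharf0 (pchar_Fp (isT : prime 3))). Qed.
Lemma two_m1 : (2%:R : K) = -1.
Proof. by apply/eqP; rewrite -subr_eq0 opprK -(natrD _ 2 1) three0. Qed.
Lemma two_neq0 : (2%:R : K) != 0.
Proof. by rewrite two_m1 oppr_eq0 oner_eq0. Qed.
Lemma sq1 (z : K) : z != 0 -> z ^+ 2 = 1.
Proof. move=> nz; have := expf_card z; rewrite card_Fp //.
by rewrite exprS -{3}(mulr1 z) => /(mulfI nz). Qed.
Lemma cardK : #|[pred c : K | c != 0]| = 2%N.
Proof. by rewrite cardC1 card_Fp. Qed.
Lemma pow_odd (z : K) a : z != 0 -> z ^+ a = z ^+ odd a.
Proof.
move=> nz; rewrite {1}(divn_eq a 2) exprD mulnC exprM sq1 // expr1n mul1r.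
by rewrite modn2.
Qed.
Lemma self_opp0 (a : K) : a = - a -> a = 0.
Proof.
move=> h; have : a * 2%:R = 0 by rewrite mulr_natr mulr2n {1}h addNr.
by move/eqP; rewrite mulf_eq0 (negPf two_neq0) orbF => /eqP.
Qed.

Lemma card_sum (T : finType) (A : {set T}) : #|A| = (\sum_k (k \in A : nat))%N.
Proof. by rewrite -sum1_card big_mkcond /=; apply: eq_bigr => i _; case: (i \in A). Qed.

Lemma odd_sum (T : finType) (F : T -> nat) :
  odd (\sum_k F k)%N = \big[addb/false]_k odd (F k).
Proof. exact: (big_morph odd oddD (erefl : odd 0 = false)). Qed.

Lemma odd_card (T : finType) (A : {set T}) :
  odd #|A| = \big[addb/false]_k (k \in A).
Proof. by rewrite card_sum odd_sum; apply: eq_bigr => k _; rewrite oddb. Qed.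

Lemma prod_pow (c : K) (T : finType) (F : T -> nat) :
  \prod_k c ^+ F k = c ^+ (\sum_k F k)%N.
Proof. by rewrite (big_morph (fun a => c ^+ a) (exprD c) (expr0 c)). Qed.

Section Main.
Variables (n s : nat) (E : 'I_s -> {set 'I_n}) (t1 : 'I_s) (d : nat).
Local Notation m := #|Xset E|.

Definition mS (S : {set 'I_s}) : 'X_{1..s} :=
  [multinom ((i \in S) + (if i == t1 then d - #|S| else 0))%N | i < s].

Definition Sfam : {set {set 'I_s}} :=
  [set S : {set 'I_s} | (#|S| <= d)%N && (odd #|S| == odd d)].

Definition w (S : {set 'I_s}) := evvec E t1 d 'X_[mS S].

Lemma mdeg_mS (S : {set 'I_s}) : (#|S| <= d)%N -> mdeg (mS S) = d.
Proof.
move=> hS; rewrite mdegE.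
rewrite (eq_bigr (fun i => (i \in S) + (if i == t1 then d - #|S| else 0))%N);
  last by move=> i _; rewrite mnmE.
by rewrite big_split /= -card_sum -big_mkcond /= big_pred1_eq subnKC.
Qed.

Lemma odd_mS (S : {set 'I_s}) k : S \in Sfam -> odd (mS S k) = (k \in S).
Proof.
rewrite inE => /andP[hS /eqP ho]; rewrite mnmE oddD oddb.
case: (k == t1) => /=; last by rewrite addbF.
by rewrite oddB // ho addbb addbF.
Qed.

Lemma evvecD f g : evvec E t1 d (f + g) = evvec E t1 d f + evvec E t1 d g.
Proof. by apply/rowP => j; rewrite !mxE mevalD mulrDl. Qed.
Lemma evvecZ c f : evvec E t1 d (c *: f) = c *: evvec E t1 d f.
Proof. by apply/rowP => j; rewrite !mxE mevalZ mulrA. Qed.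
Lemma evvec0 : evvec E t1 d 0 = 0.
Proof. by apply/rowP => j; rewrite !mxE meval0 mul0r. Qed.
Lemma evvec_sum (I : Type) (r : seq I) (P : pred I) (F : I -> {mpoly K[s]}) :
  evvec E t1 d (\sum_(i <- r | P i) F i) = \sum_(i <- r | P i) evvec E t1 d (F i).
Proof. exact: (big_morph _ evvecD evvec0). Qed.

Lemma torusP (x : {ffun 'I_n -> K}) : reflect (forall i, x i != 0) (x \in torus n).
Proof. by rewrite inE; apply: forallP. Qed.

Lemma phiE_nz (x : {ffun 'I_n -> K}) k : x \in torus n -> phiE E x k != 0.
Proof. by move/torusP=> h; rewrite ffunE; apply/prodf_neq0 => i _. Qed.

Lemma rep_pclass (y : {ffun 'I_s -> K}) : exists2 c : K, c != 0 & rep (pclass y) = [ffun k => c * y k].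
Proof.
rewrite /rep; case: pickP => [z | H] /=.
  by rewrite inE => /existsP[c /andP[c0 /eqP ->]]; exists c.
have := H y; rewrite inE => /negbT/existsPn/(_ 1).
by rewrite oner_eq0 /=; move/eqP; case; apply/ffunP => k; rewrite ffunE mul1r.
Qed.

Lemma rep_nz (j : 'I_m) k : rep (enum_val j) k != 0.
Proof.
have /imsetP[x hx ->] := enum_valP j.
have [c c0 ->] := rep_pclass (phiE E x).
by rewrite ffunE mulf_neq0 // phiE_nz.
Qed.

Lemma evX_odd (f g : 'X_{1..s}) (r : 'I_s -> K) : (forall k, r k != 0) ->
  (forall k, odd (f k) = odd (g k)) -> 'X_[f].@[r] = 'X_[g].@[r].
Proof.
move=> rnz fg; rewrite !mevalX; apply: eq_bigr => k _.
by rewrite pow_odd // [RHS]pow_odd // fg.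
Qed.

Lemma evvecX_w (f : 'X_{1..s}) : mdeg f = d ->
  [set k | odd (f k)] \in Sfam /\ evvec E t1 d 'X_[f] = w [set k | odd (f k)].
Proof.
move=> hf.
have hin : [set k | odd (f k)] \in Sfam.
  rewrite inE; apply/andP; split.
    rewrite card_sum -hf mdegE; apply: leq_sum => k _; rewrite inE.
    by case: (f k) => [|a] //=; case: (odd a).
  rewrite odd_card -hf mdegE odd_sum. apply/eqP/eq_bigr => k _; by rewrite inE.
split=> //; apply/rowP => j; rewrite !mxE; congr (_ / _).
apply: evX_odd => [k|k]; first exact: rep_nz.
by rewrite odd_mS // inE.
Qed.


Definition x1 : {ffun 'I_n -> K} := [ffun=> 1].
Lemma x1_torus : x1 \in torus n.
Proof. by apply/torusP => i; rewrite ffunE oner_eq0. Qed.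
Definition X0 : pclass (phiE E x1) \in Xset E :=
  imset_f (fun x => pclass (phiE E x)) x1_torus.
Definition idx (x : {ffun 'I_n -> K}) : 'I_m := enum_rank_in X0 (pclass (phiE E x)).

Lemma mevalX_scale (f : 'X_{1..s}) (c : K) (y : {ffun 'I_s -> K}) :
  'X_[f].@[fun k => [ffun k => c * y k] k] = c ^+ mdeg f * 'X_[f].@[y].
Proof.
rewrite !mevalX mdegE -prod_pow -big_split /=; apply: eq_bigr => k _.
by rewrite ffunE exprMn.
Qed.

Lemma entry_w (S : {set 'I_s}) x : x \in torus n -> S \in Sfam ->
  w S 0 (idx x) = 'X_[mS S].@[phiE E x] / phiE E x t1 ^+ d.
Proof.
move=> hx hS; rewrite /w mxE /idx enum_rankK_in; last exact: imset_f.
have [c c0 ->] := rep_pclass (phiE E x).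
move: hS; rewrite inE => /andP[hS _].
rewrite mevalX_scale mdeg_mS // ffunE exprMn invfM mulrACA divff ?mul1r //.
exact: expf_neq0.
Qed.

Definition chi (F : {set 'I_s}) (x : {ffun 'I_n -> K}) : K :=
  \prod_k (phiE E x k) ^+ (k \in F).

Definition symd (S T : {set 'I_s}) : {set 'I_s} := [set k | (k \in S) != (k \in T)].

Lemma entry_prod S T x : x \in torus n -> S \in Sfam -> T \in Sfam ->
  w S 0 (idx x) * w T 0 (idx x) = chi (symd S T) x.
Proof.
move=> hx hS hT; rewrite !entry_w // mulrACA -invfM -exprMn -expr2 sq1 ?phiE_nz //.
rewrite expr1n invr1 mulr1 !mevalX -big_split /=; apply: eq_bigr => k _.
rewrite -exprD (pow_odd _ (mS S k + mS T k)) ?phiE_nz //.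
rewrite oddD !odd_mS // inE; by case: (k \in S); case: (k \in T).
Qed.

Definition flip (v : 'I_n) (x : {ffun 'I_n -> K}) : {ffun 'I_n -> K} :=
  [ffun i => if i == v then - x i else x i].

Lemma flipK v : involutive (flip v).
Proof.
move=> x; apply/ffunP => i; rewrite !ffunE; case: (i == v) => //; exact: opprK.
Qed.

Lemma flip_torus v x : (flip v x \in torus n) = (x \in torus n).
Proof.
apply/torusP/torusP => h i; have := h i; rewrite ?ffunE; case: (i == v) => //;
  by rewrite ?oppr_eq0.
Qed.

Lemma phiE_flip v x k :
  phiE E (flip v x) k = (if v \in E k then -1 else 1) * phiE E x k.
Proof.
rewrite !ffunE; case: (boolP (v \in E k)) => hv.
  rewrite (bigD1 v hv) [in RHS](bigD1 v hv) /= ffunE eqxx mulN1r mulNr; congr (- (_ * _)).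
  by apply: eq_bigr => i /andP[_ /negPf hi]; rewrite ffunE hi.
rewrite mul1r; apply: eq_bigr => i hi; rewrite ffunE.
by case: eqP => // eiv; rewrite -eiv hi in hv.
Qed.

Lemma chi_flip F v x : chi F (flip v x) = (-1) ^+ (sub_deg E F v) * chi F x.
Proof.
rewrite /chi (eq_bigr (fun k => (if v \in E k then -1 else 1) ^+ (k \in F) *
   (phiE E x k) ^+ (k \in F))); last by move=> k _; rewrite phiE_flip exprMn.
rewrite big_split /=; congr (_ * _).
rewrite /sub_deg -prodr_const [RHS]big_mkcond /=; apply: eq_bigr => k _.
rewrite inE; case: (k \in F); case: (v \in E k) => //=.
Qed.

Lemma sum_chi0 : \sum_(x in torus n) chi set0 x = (2 ^ n)%:R.
Proof.
rewrite (eq_bigr (fun _ => 1)); last first.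
  by move=> x _; rewrite /chi big1 // => k _; rewrite in_set0 expr0.
rewrite sumr_const; congr (_%:R).
have -> : #|torus n| = #|@ffun_on_mem 'I_n K (mem [pred c : K | c != 0])|.
  apply: eq_card => x; rewrite inE; apply/forallP/ffun_onP => h i; exact: h.
by rewrite card_ffun_on cardK card_ord.
Qed.

Lemma sum_chi0_nz : \sum_(x in torus n) chi set0 x != 0.
Proof. by rewrite sum_chi0 natrX expf_neq0 // two_neq0. Qed.

Lemma sum_chi_odd F v : odd (sub_deg E F v) -> \sum_(x in torus n) chi F x = 0.
Proof.
move=> hv; apply: self_opp0.
rewrite {1}(reindex_inj (can_inj (flipK v))) /=.
rewrite (eq_bigl (fun x => x \in torus n)); last by move=> x; rewrite flip_torus.
rewrite -sumrN; apply: eq_bigr => x _.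
by rewrite chi_flip -signr_odd hv mulN1r.
Qed.


Hypothesis noE :
  ~ (exists F : {set 'I_s}, [/\ (0 < #|F|)%N, ~~ odd #|F| & eulerian E F]).

Lemma symd_sum S T : S \in Sfam -> T \in Sfam -> S != T ->
  \sum_(x in torus n) chi (symd S T) x = 0.
Proof.
move=> hS hT nST; set F := symd S T.
have F0 : (0 < #|F|)%N.
  rewrite card_gt0; apply: contra nST => /eqP F0; apply/eqP/setP => k.
  have := in_set0 k; rewrite -F0 inE; by case: (k \in S); case: (k \in T).
have Fe : ~~ odd #|F|.
  rewrite odd_card (eq_bigr (fun k => (k \in S) (+) (k \in T))); last first.
    by move=> k _; rewrite inE; case: (k \in S); case: (k \in T).
  rewrite big_split /= -!odd_card.
  move: hS hT; rewrite !inE => /andP[_ /eqP ->] /andP[_ /eqP ->].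
  by rewrite addbb.
case: (pickP (fun v => odd (sub_deg E F v))) => [v hv | H].
  exact: sum_chi_odd hv.
by exfalso; apply: noE; exists F; split=> // v; rewrite H.
Qed.

Definition W := [tuple w (enum_val i) | i < #|Sfam|].

Lemma W_nth (i : 'I_#|Sfam|) : W`_i = w (enum_val i).
Proof. exact: nth_mktuple. Qed.

Lemma symd_id S : symd S S = set0.
Proof. by apply/setP => k; rewrite !inE eqxx. Qed.

Lemma freeW : free W.
Proof.
apply/freeP => k hk i0.
set T := enum_val i0.
have hT : T \in Sfam := enum_valP i0.
pose L (v : 'rV[K]_m) := \sum_(x in torus n) w T 0 (idx x) * v 0 (idx x).
have := congr1 L hk.
have -> : L 0 = 0 by rewrite /L big1 // => x _; rewrite [X in _ * X]mxE mulr0.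
have -> : L (\sum_(i < #|Sfam|) k i *: W`_i) =
   \sum_(i < #|Sfam|) k i * \sum_(x in torus n) chi (symd T (enum_val i)) x.
  rewrite /L (eq_bigr (fun x => \sum_(i < #|Sfam|) k i * (w T 0 (idx x) * W`_i 0 (idx x))));
    last first.
    move=> x _; rewrite summxE mulr_sumr; apply: eq_bigr => i _.
    by rewrite [X in _ * X]mxE mulrCA.
  rewrite exchange_big /=; apply: eq_bigr => i _; rewrite mulr_sumr.
  by apply: eq_bigr => x hx; rewrite W_nth entry_prod // enum_valP.
rewrite (bigD1 i0) //= [X in _ + X]big1 ?addr0; last first.
  move=> i hi; rewrite symd_sum ?mulr0 ?enum_valP //.
  by apply: contra hi => /eqP /enum_val_inj ->.
rewrite symd_id => /eqP; rewrite mulf_eq0 (negPf sum_chi0_nz) orbF.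
by move/eqP.
Qed.

Lemma memW v : v \in <<W>>%VS <-> in_CX E t1 d v.
Proof.
split.
  move/coord_span => ->.
  exists (\sum_(i < #|Sfam|) coord W i v *: 'X_[mS (enum_val i)]); split.
    apply: rpred_sum => i _; apply: rpredZ; rewrite dhomogX; apply/eqP; apply: mdeg_mS.
    by have := enum_valP i; rewrite inE => /andP[].
  rewrite evvec_sum; apply: eq_bigr => i _; by rewrite evvecZ W_nth.
case=> f [hf ->]; rewrite {1}(mpolyE f) evvec_sum big_seq; apply: memv_suml => m' hm.
rewrite evvecZ; apply: memvZ.
have [hin ->] := evvecX_w m' (dhomog_mf hf hm).
apply: memv_span; rewrite -(enum_rankK_in hin hin) -(tnth_mktuple (fun i => w (enum_val i))).
exact: mem_tnth.
Qed.

Lemma card_Sfam : #|Sfam| = (\sum_(i < d./2.+1) 'C(s, d - 2 * i))%N.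
Proof.
rewrite (eq_bigr (fun i : 'I_d./2.+1 => \sum_(S : {set 'I_s}) (#|S| == d - 2 * i : nat)))%N;
  last first.
  by move=> i _; rewrite -[s in 'C(s, _)]card_ord -card_draws card_sum;
    apply: eq_bigr => S _; rewrite inE.
rewrite exchange_big /= card_sum; apply: eq_bigr => S _.
rewrite inE; case: (boolP ((#|S| <= d)%N && (odd #|S| == odd d))) => [/andP[h1 /eqP h2] | h].
  have hev : ((d - #|S|) %% 2 = 0)%N by rewrite modn2 oddB // h2 addbb.
  have hi : ((d - #|S|) %/ 2 < d./2.+1)%N by rewrite -divn2; lia.
  rewrite (bigD1 (Ordinal hi)) //= big1.
    have -> : (#|S| == d - 2 * ((d - #|S|) %/ 2))%N by apply/eqP; lia.
    by [].
  move=> i /negPf hne; apply/eqP; rewrite eqb0; apply/negP => /eqP hS.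
  move/negbT: hne => /eqP; apply; apply/val_inj => /=.
  have := ltn_ord i; move: (nat_of_ord i) hS => ii hS; rewrite -divn2 => hii; lia.
rewrite big1 // => i _; apply/eqP; rewrite eqb0; apply: contra h => /eqP hS.
have hi := ltn_ord i; move: (nat_of_ord i) hi hS => ii hi hS; rewrite -divn2 in hi.
have h2i : (2 * ii <= d)%N by lia.
rewrite hS leq_subr /= oddB // oddM /= addbF.
by [].
Qed.

End Main.

Theorem mainTheorem4 (n s : nat) (E : 'I_s -> {set 'I_n}) (hs : (0 < s)%N) :
  simple_graph E ->
  ~ (exists F : {set 'I_s}, [/\ (0 < #|F|)%N, ~~ odd #|F| & eulerian E F]) ->
  forall d : nat,
    exists C : {vspace 'rV[K]_(#|Xset E|)},
      (forall v, v \in C <-> in_CX E (Ordinal hs) d v) /\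
      \dim C = (\sum_(i < d./2.+1) 'C(s, d - 2 * i))%N.
Proof.
move=> _ noE d.
exists <<@W n s E (Ordinal hs) d>>%VS; split.
  move=> v; exact: memW.
by rewrite (eqP (@freeW n s E (Ordinal hs) d noE)) size_tuple card_Sfam.
Qed.
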